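(* Under the DIMPLE-GDPG model with Assumptions A1, A3, A4, A5, A6, define for each $m\in[M]$ $$\mathbf{H}^{(m)}=L_m^{-1/2}\sum_{l:\,c(l)=m}(\mathbf{P}^{(l)})^2.$$ Then $\mathbf{H}^{(m)}=\mathbf{V}^{(m)}\big(L_m^{-1/2}\sum_{c(l)=m}(\mathbf{Q}^{(l)})^2\big)(\mathbf{V}^{(m)})^T$ and there is a constant $C>0$ depending only on the constants in the assumptions such that $$\sigma_{K_m}(\mathbf{H}^{(m)})\ \ge\ C\,\frac{n^2\rho_n^2\sqrt{L}}{K^2\sqrt{M}}\qquad\text{for all } m\in[M].$$
   Context: DIMPLE-GDPG model: surjective $c:[L]\to[M]$, $L_m=|\{l:c(l)=m\}|$; for each $m$, $\mathbf{V}^{(m)}\in\mathbb{R}^{n\times K_m}$ with orthonormal columns; for each $l$, a symmetric $\mathbf{Q}^{(l)}\in\mathbb{R}^{K_m\times K_m}$, $m=c(l)$, with $\mathbf{P}^{(l)}=\mathbf{V}^{(m)}\mathbf{Q}^{(l)}(\mathbf{V}^{(m)})^T\in[0,1]^{n\times n}$. $K=\max_mK_m$. $\sigma_k$ is the $k$-th largest singular value; $\|\mathbf{X}\|_\infty$ the maximum absolute entry. Assumptions (absolute positive constants): A1: $C_KK\le K_m\le K$ and $\underline{c}L/M\le L_m\le\bar cL/M$; A3: $\mathbf{P}^{(l)}=\rho_{n,l}\mathbf{P}_0^{(l)}$, $\|\mathbf{P}_0^{(l)}\|_\infty=1$, $\min_l\rho_{n,l}\ge C_\rho n^{-1}\log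 n$; A4: $\sigma_{K_m}(\mathbf{Q}^{(l)})/\sigma_1(\mathbf{Q}^{(l)})\ge C_\lambda\in(0,1)$; A5: $\underline{c}_\rho\rho_n\le\rho_{n,l}\le\bar c_\rho\rho_n$ with $\rho_n=L^{-1}\sum_l\rho_{n,l}$; A6: $\|\mathbf{P}_0^{(l)}\|_F^2\ge C_{0,P}^2K^{-1}n^2$. *)

(* Defs.v *)
From HB Require Import structures.
From mathcomp Require Import all_boot all_order all_algebra.
From mathcomp Require Import reals exp.
From mathcomp Require Import polyrcf.
Set Implicit Arguments. Unset Strict Implicit. Unset Printing Implicit Defensive.
Import Order.TTheory GRing.Theory Num.Theory.
Local Open Scope ring_scope.

Section Defs.
Variable R : rcfType.

Definition maxabs {p q : nat} (A : 'M[R]_(p, q)) : R :=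
  \big[Num.max/0]_(i < p) \big[Num.max/0]_(j < q) `|A i j|.

Definition frob2 {p q : nat} (A : 'M[R]_(p, q)) : R :=
  \sum_(i < p) \sum_(j < q) A i j ^+ 2.

(* singular values of A, with multiplicity, in decreasing order: square roots of
   the eigenvalues (roots of the characteristic polynomial, counted with
   multiplicity) of A^T A *)
Definition sing_vals {p q : nat} (A : 'M[R]_(p, q)) : seq R :=
  let chi := char_poly (A^T *m A) in
  sort (fun x y => y <= x)
    (flatten [seq nseq (mup x chi) (Num.sqrt x) | x <- rootsR chi]).

(* sigma k A : the k-th largest singular value (k >= 1; 0 if k exceeds the number) *)
Definition sigma {p q : nat} (k : nat) (A : 'M[R]_(p, q)) : R :=
  nth 0 (sing_vals A) k.-1.

End Defs.

(* Main.v *)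
Require Import Defs.
From HB Require Import structures.
From mathcomp Require Import all_boot all_order all_algebra.
From mathcomp Require Import reals exp.
From mathcomp Require Import polyrcf.
From mathcomp Require Import complex spectral sesquilinear ring lra.
Import Order.TTheory GRing.Theory Num.Theory.
Local Open Scope ring_scope.

Lemma sumn_sel (T : eqType) (r : seq T) (y : T) (f : T -> nat) :
  sumn [seq ((x == y) * f x)%N | x <- r] = (count_mem y r * f y)%N.
Proof.
elim: r => //= x r ->; case: eqP => [->|_]; rewrite ?eqxx ?mul1n ?mul0n ?add0n //.

Qed.

Lemma flat_perm (R : rcfType) (s : seq R) :
  perm_eq (flatten [seq nseq (mup x (\prod_(a <- s) ('X - a%:P))) x
                   | x <- rootsR (\prod_(a <- s) ('X - a%:P))]) s.
Proof.
set p := \prod_(a <- s) _.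
have p0 : p != 0 by apply: monic_neq0; apply: monic_prod_XsubC.
apply/allP => y _ /=; apply/eqP.
rewrite count_flatten -map_comp.
rewrite (@eq_map _ _ _ (fun x => ((x == y) * mup x p)%N)); last first.
  by move=> x /=; rewrite count_nseq /= eq_sym.
rewrite sumn_sel /p mu_prod_XsubC -/p.
have := roots_on_rootsR p0 y; rewrite in_itv /= => Hr.
case Hy: (y \in rootsR p).
  by rewrite (count_uniq_mem _ (uniq_roots _ _ _)) Hy mul1n.
rewrite (count_memPn (negbT Hy)) mul0n.
have Hn : ~~ root p y by rewrite Hr Hy.
by rewrite -(mu_prod_XsubC y s) -/p mupNroot.
Qed.

Lemma map_flat_nseq (T U : Type) (f : T -> U) (g : T -> nat) (r : seq T) :
  map f (flatten [seq nseq (g x) x | x <- r]) = flatten [seq nseq (g x) (f x) | x <- r].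
Proof. by elim: r => //= x r <-; rewrite map_cat map_nseq. Qed.

Definition geR (R : rcfType) := (fun x y : R => y <= x).

Lemma sing_vals_eq (R : rcfType) p q (A : 'M[R]_(p,q)) (s : seq R) :
  char_poly (A^T *m A) = \prod_(a <- s) ('X - a%:P) ->
  sing_vals A = sort (@geR R) (map Num.sqrt s).
Proof.
move=> H; rewrite /sing_vals /= H.
apply/perm_sortP.
- by move=> x y; rewrite /geR le_total.
- by move=> x y z /= H1 H2; apply: le_trans H2 H1.
- by move=> x y /andP[H1 H2]; apply/le_anti; rewrite H1 H2.
rewrite -map_flat_nseq; apply: perm_map; exact: flat_perm.
Qed.

Lemma geR_trans (R : rcfType) : transitive (@geR R).
Proof. by move=> a b c /= H1 H2; apply: le_trans H2 H1. Qed.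
Lemma geR_refl (R : rcfType) : reflexive (@geR R).
Proof. by move=> a; rewrite /geR. Qed.

Lemma sorted_geR (R : rcfType) (s : seq R) : sorted (@geR R) (sort (@geR R) s).
Proof. by apply: sort_sorted => x y; rewrite /geR le_total. Qed.

Lemma sort_head_ge (R : rcfType) (s : seq R) x : x \in s ->
  x <= nth 0 (sort (@geR R) s) 0.
Proof.
move=> xs.
have : x \in sort (@geR R) s by rewrite mem_sort.
move/(nthP 0) => [j jlt <-].
have H := sorted_leq_nth (@geR_trans R) (@geR_refl R) 0 (sorted_geR _ s).
apply: (H 0%N j) => //.
- by rewrite inE (leq_ltn_trans _ jlt).
Qed.

Lemma sort_last_le (R : rcfType) (s : seq R) x : x \in s ->
  nth 0 (sort (@geR R) s) (size s).-1 <= x.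
Proof.
move=> xs.
have : x \in sort (@geR R) s by rewrite mem_sort.
move/(nthP 0) => [j jlt <-].
have szs : size (sort (@geR R) s) = size s by rewrite size_sort.
have H := sorted_leq_nth (@geR_trans R) (@geR_refl R) 0 (sorted_geR _ s).
apply: (H j (size s).-1) => //.
- by rewrite inE szs; rewrite szs in jlt; rewrite prednK // (leq_ltn_trans _ jlt).
- by rewrite szs in jlt; rewrite -ltnS prednK // (leq_ltn_trans _ jlt).
Qed.

Lemma sort_count_ge (R : rcfType) (s : seq R) (lam : R) (k : nat) :
  (0 < k)%N -> (k <= count (fun x : R => (lam <= x)%R) s)%N ->
  lam <= nth 0 (sort (@geR R) s) k.-1.
Proof.
move=> k0 Hc; set t := sort (@geR R) s.
have Hct : count (fun x : R => (lam <= x)%R) t = count (fun x : R => (lam <= x)%R) s.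
  by apply/permP; rewrite perm_sort.
have szt : size t = size s by rewrite size_sort.
have klt : (k.-1 < size t)%N.
  by rewrite szt prednK //; exact: leq_trans Hc (count_size _ s).
rewrite leNgt; apply/negP => Hlt.
have : (count (fun x : R => (lam <= x)%R) t <= k.-1)%N.
  rewrite -(cat_take_drop k.-1 t) count_cat.
  have -> : count (fun x : R => (lam <= x)%R) (drop k.-1 t) = 0%N.
    apply/eqP; rewrite -leqn0 leqNgt -has_count; apply/hasPn => x.
    move/(nthP 0) => [j]; rewrite size_drop => jlt; rewrite nth_drop => <-.
    rewrite -ltNge; apply: le_lt_trans Hlt.
    have H := sorted_leq_nth (@geR_trans R) (@geR_refl R) 0 (sorted_geR _ s).
    apply: (H k.-1 (k.-1 + j)) => //.
    + by rewrite inE -ltn_subRL.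
    + by rewrite leq_addr.
  rewrite addn0; apply: leq_trans (count_size _ _) _.
  by rewrite size_take; case: ifP => // /negbT; rewrite -leqNgt.
by rewrite Hct leqNgt prednK // Hc.
Qed.

Lemma char_poly_conj (F : fieldType) n (P D : 'M[F]_n) : P \in unitmx ->
  char_poly (invmx P *m D *m P) = char_poly D.
Proof.
move=> Pu; rewrite /char_poly /char_poly_mx.
set Q := map_mx polyC P; set Qi := map_mx polyC (invmx P).
have QiQ : Qi *m Q = 1%:M by rewrite -map_mxM mulVmx // map_mx1.
have -> : 'X%:M - map_mx polyC (invmx P *m D *m P) =
          Qi *m ('X%:M - map_mx polyC D) *m Q.
  rewrite !map_mxM -/Q -/Qi mulmxBr mulmxBl mul_mx_scalar -scalemxAl QiQ scalemx1.
  by [].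
by rewrite !det_mulmx mulrAC -det_mulmx QiQ det1 mul1r.
Qed.

Section Gram.
Variable R : rcfType.
Local Notation C := (R[i]).
Local Notation toC := (real_complex R).
Local Open Scope sesquilinear_scope.

Lemma conj_toC (x : R) : (toC x)^* = toC x.
Proof. exact: conjc_real. Qed.

Lemma tC_toC p q (A : 'M[R]_(p,q)) : (map_mx toC A)^t* = map_mx toC A^T.
Proof. by apply/matrixP => i j; rewrite !mxE conj_toC. Qed.

Lemma gram_spec p q (A : 'M[R]_(p,q)) :
  exists (P : 'M[C]_q) (e : 'I_q -> R),
  [/\ P \is unitarymx, (forall i, 0 <= e i),
      map_mx toC (A^T *m A) = P^t* *m diag_mx (\row_i toC (e i)) *m P &
      sing_vals A = sort (@geR R) (map (fun i => Num.sqrt (e i)) (enum 'I_q))].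
Proof.
set G := A^T *m A; set Gc := map_mx toC G.
have GcT : Gc^t* = Gc by rewrite tC_toC /G trmx_mul trmxK.
have Gn : Gc \is normalmx by apply/normalmxP; rewrite GcT.
have := orthomx_spectralP Gn.
set P := spectralmx Gc; set d := spectral_diag Gc => Gd.
have Pu : P \is unitarymx by apply: spectral_unitarymx.
rewrite invmx_unitary // in Gd.
have PPt : P *m P^t* = 1%:M by apply/unitarymxP.
set B := P *m (map_mx toC A)^T.
have dB : diag_mx d = B *m B^t*.
  have -> : diag_mx d = P *m Gc *m P^t*.
    by rewrite Gd !mulmxA PPt mul1mx -mulmxA PPt mulmx1.
  rewrite /B trmx_mul map_mxM !mulmxA; congr (_ *m _).
  rewrite -mulmxA; congr (_ *m _).
  rewrite /Gc /G map_mxM map_trmx; congr (_ *m _).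
  by apply/matrixP => i j; rewrite !mxE /= conj_toC.
have d0 : forall i, 0 <= d 0 i.
  move=> i; move/matrixP: dB => /(_ i i); rewrite mxE eqxx mulr1n => ->.
  rewrite mxE; apply: sumr_ge0 => j _; rewrite !mxE; exact: mul_conjC_ge0.
pose e i := complex.Re (d 0 i).
have de : forall i, d 0 i = toC (e i) by move=> i; rewrite RRe_real // ger0_real.
exists P, e; split => //.
- by move=> i; rewrite -ler0c -de.
- rewrite -/Gc Gd; congr (_ *m diag_mx _ *m _).
  by apply/rowP => i; rewrite !mxE de.
have Hc : char_poly G = \prod_(a <- map e (enum 'I_q)) ('X - a%:P).
  apply: (map_poly_inj toC); rewrite map_char_poly -/Gc.
  rewrite Gd -invmx_unitary // char_poly_conj ?unitarymx_unit //.
  rewrite char_poly_trig ?diag_mx_is_trig // rmorph_prod big_map big_enum /=.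
  apply: eq_bigr => i _; rewrite map_polyXsubC mxE eqxx mulr1n de //.
by rewrite (sing_vals_eq _ _ _ _ _ Hc) -map_comp.
Qed.
End Gram.

Set Implicit Arguments. Unset Strict Implicit. Unset Printing Implicit Defensive.

Section QF.
Variable R : rcfType.
Local Notation C := (complex R).
Local Notation toC := (real_complex R).
Local Open Scope sesquilinear_scope.

Definition nsq n (z : 'rV[C]_n) : C := (z *m z^t*) 0 0.

Lemma nsqE n (z : 'rV[C]_n) : nsq z = \sum_i z 0 i * (z 0 i)^*.
Proof. by rewrite /nsq mxE; apply: eq_bigr => i _; rewrite !mxE. Qed.

Lemma nsq_ge0 n (z : 'rV[C]_n) : 0 <= nsq z.
Proof. by rewrite nsqE; apply: sumr_ge0 => i _; apply: mul_conjC_ge0. Qed.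

Lemma nsq_eq0 n (z : 'rV[C]_n) : nsq z = 0 -> z = 0.
Proof.
rewrite nsqE => H; apply/rowP => i; rewrite mxE.
have := psumr_eq0P (P := predT) (fun j _ => mul_conjC_ge0 (z 0 j)) H (i := i) isT.
by move/eqP; rewrite mul_conjC_eq0 => /eqP.
Qed.

Lemma qf_diag n (w d : 'rV[C]_n) :
  (w *m diag_mx d *m w^t*) 0 0 = \sum_i d 0 i * (w 0 i * (w 0 i)^*).
Proof.
rewrite mul_mx_diag mxE; apply: eq_bigr => i _; rewrite !mxE.
by rewrite mulrCA mulrA.
Qed.

Lemma unit_rot n (P : 'M[C]_n) (z : 'rV[C]_n) (M : 'M[C]_n) : P \is unitarymx ->
  (z *m (P^t* *m M *m P) *m z^t*) = (z *m P^t*) *m M *m (z *m P^t*)^t*.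
Proof.
move=> Pu; rewrite trmx_mul map_mxM trmxCK !mulmxA.
by [].
Qed.

Lemma unit_nsq n (P : 'M[C]_n) (z : 'rV[C]_n) : P \is unitarymx ->
  nsq (z *m P^t*) = nsq z.
Proof.
move=> Pu; rewrite /nsq trmx_mul map_mxM trmxCK !mulmxA -(mulmxA z).
by rewrite -invmx_unitary // mulVmx ?unitarymx_unit // mulmx1.
Qed.

Lemma sigma_nonneg p q (A : 'M[R]_(p,q)) k : 0 <= sigma k A.
Proof.
have [P [e [Pu e0 _ Hs]]] := gram_spec _ _ _ A.
rewrite /sigma Hs; set s := sort _ _.
case: (ltnP k.-1 (size s)) => H; last by rewrite nth_default.
have : nth 0 s k.-1 \in s by apply: mem_nth.
rewrite mem_sort => /mapP [i _ ->]; exact: sqrtr_ge0.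
Qed.

Lemma sig_last_qf p q (A : 'M[R]_(p,q)) (z : 'rV[C]_q) :
  toC (sigma q A ^+ 2) * nsq z <= (z *m map_mx toC (A^T *m A) *m z^t*) 0 0.
Proof.
have := sigma_nonneg A q.
have [P [e [Pu e0 -> Hs]]] := gram_spec _ _ _ A => sg0.
rewrite unit_rot // qf_diag -(unit_nsq z Pu) nsqE mulr_sumr.
apply: ler_sum => i _; rewrite mxE.
apply: ler_wpM2r; first exact: mul_conjC_ge0.
rewrite mxE lecR.
have Hl : sigma q A <= Num.sqrt (e i).
  rewrite /sigma Hs.
  have := @sort_last_le R (map (fun i => Num.sqrt (e i)) (enum 'I_q)) (Num.sqrt (e i)).
  rewrite size_map size_enum_ord; apply; apply/mapP; exists i => //; exact: mem_enum.
rewrite -(sqr_sqrtr (e0 i)) !expr2; apply: ler_pM => //.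
Qed.

Lemma frob_sig1 p q (A : 'M[R]_(p,q)) : frob2 A <= q%:R * sigma 1 A ^+ 2.
Proof.
have := sigma_nonneg A 1.
have [P [e [Pu e0 HG Hs]]] := gram_spec _ _ _ A => sg0.
have Hf : frob2 A = \sum_i e i.
  apply: (@complexI R).
  have -> : toC (frob2 A) = \tr (map_mx toC (A^T *m A)).
    rewrite /frob2 /mxtrace rmorph_sum.
    rewrite (eq_bigr (fun i => \sum_j toC (A i j ^+ 2))); last by move=> i _; rewrite rmorph_sum.
    rewrite exchange_big; apply: eq_bigr => j _.
    rewrite !mxE rmorph_sum; apply: eq_bigr => i _; rewrite !mxE expr2 //.
  rewrite HG mxtrace_mulC mulmxA -invmx_unitary // mulmxV ?unitarymx_unit //.
  by rewrite mul1mx mxtrace_diag rmorph_sum; apply: eq_bigr => i _; rewrite mxE.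
have -> : (q%:R : R) * sigma 1 A ^+ 2 = \sum_(i < q) sigma 1 A ^+ 2.
  by rewrite sumr_const card_ord mulr_natl.
rewrite Hf; apply: ler_sum => i _.
have Hl : Num.sqrt (e i) <= sigma 1 A.
  rewrite /sigma Hs /=; apply: sort_head_ge.
  apply/mapP; exists i => //; exact: mem_enum.
rewrite -(sqr_sqrtr (e0 i)) !expr2; apply: ler_pM => //; exact: sqrtr_ge0.
Qed.

End QF.

Section F3.
Variable R : rcfType.
Local Notation C := (complex R).
Local Notation toC := (real_complex R).
Local Open Scope sesquilinear_scope.

Lemma tC_sub k (u v : 'rV[C]_k) (l : R) :
  (u - toC l *: v)^t* = u^t* - toC l *: v^t*.
Proof. by apply/matrixP => i j; rewrite !mxE rmorphB rmorphM /= conj_toC. Qed.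

Lemma nsq_sub k (u v : 'rV[C]_k) (l : R) :
  nsq (u - toC l *: v) =
  nsq u - toC l * ((u *m v^t*) 0 0 + (v *m u^t*) 0 0) + toC l ^+ 2 * nsq v.
Proof.
rewrite /nsq tC_sub mulmxBl !mulmxBr -!scalemxAl -!scalemxAr.
rewrite !mxE.
ring.
Qed.

Lemma nsq_lower k (z : 'rV[C]_k) (S : 'M[R]_k) (lam : R) :
  S^T = S -> 0 <= lam ->
  toC lam * nsq z <= (z *m map_mx toC S *m z^t*) 0 0 ->
  toC (lam ^+ 2) * nsq z <= nsq (z *m map_mx toC S).
Proof.
move=> ST l0 HS.
set u := z *m map_mx toC S; set b := (z *m map_mx toC S *m z^t*) 0 0.
have Sc : (map_mx toC S)^t* = map_mx toC S by rewrite tC_toC ST.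
have e1 : (u *m z^t*) 0 0 = b by [].
have e2 : (z *m u^t*) 0 0 = b by rewrite /u trmx_mul map_mxM Sc mulmxA.
have := nsq_ge0 (u - toC lam *: z); rewrite nsq_sub e1 e2 => H0.
have l0' : 0 <= toC lam by rewrite ler0c.
have H1 : 0 <= toC lam * (b - toC lam * nsq z).
  by apply: mulr_ge0 => //; rewrite subr_ge0.
rewrite -subr_ge0.
have -> : nsq u - toC (lam ^+ 2) * nsq z =
   (nsq u - toC lam * (b + b) + toC lam ^+ 2 * nsq z) + 2%:R * (toC lam * (b - toC lam * nsq z)).
  rewrite rmorphXn /=; ring.
apply: addr_ge0 => //; apply: mulr_ge0 => //.
Qed.

Lemma F3 n k (V : 'M[R]_(n,k)) (S : 'M[R]_k) (lam : R) :
  (0 < k)%N -> V^T *m V = 1%:M -> S^T = S -> 0 <= lam ->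
  (forall z : 'rV[C]_k, toC lam * nsq z <= (z *m map_mx toC S *m z^t*) 0 0) ->
  lam <= sigma k (V *m S *m V^T).
Proof.
move=> k0 VV ST l0 HS.
set H := V *m S *m V^T.
have [P [e [Pu e0 HG Hs]]] := gram_spec _ _ _ H.
set js := [seq i <- enum 'I_n | lam <= Num.sqrt (e i)].
suff Hk : (k <= size js)%N.
  rewrite /sigma Hs; apply: sort_count_ge => //.
  by rewrite count_map -size_filter.
rewrite leqNgt; apply/negP => Hlt.
set c := size js.
set t := in_tuple js.
pose E : 'M[C]_(n, c) := \matrix_(i, j) ((i == tnth t j)%:R).
pose W : 'M[C]_(k, n) := map_mx toC V^T.
pose M := W *m P^t* *m E.
have rM : (\rank M <= c)%N := leq_trans (mxrankM_maxr _ _) (rank_leq_col E).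
have Kn : kermx M != 0.
  apply/eqP => K0; have := mxrank_ker M; rewrite K0 mxrank0 => /esym/eqP.
  rewrite subn_eq0 => Hkk.
  by move: Hlt; rewrite ltnNge (leq_trans Hkk rM).
case/rowV0Pn: Kn => z zK z0.
have zM : z *m M = 0 by apply/sub_kermxP.
set y := z *m W; set w := y *m P^t*.
have wJ : forall i, lam <= Num.sqrt (e i) -> w 0 i = 0.
  move=> i Hi; have : i \in t by rewrite mem_filter Hi mem_enum.
  case/tnthP => j ->.
  move/matrixP: zM => /(_ 0 j); rewrite /M !mulmxA -/y -/w mxE [RHS]mxE => <-.
  have Ej : forall l, E l j = (l == tnth t j)%:R by move=> l; rewrite /E mxE.
  rewrite (bigD1 (tnth t j)) //= Ej eqxx mulr1 big1 ?addr0 // => l /negbTE Hl.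
  by rewrite Ej Hl mulr0.
have Wt : W^t* = map_mx toC V by rewrite /W tC_toC trmxK.
have WW : W *m W^t* = 1%:M by rewrite Wt /W -map_mxM VV map_mx1.
have HT : H^T = H by rewrite /H !trmx_mul trmxK ST mulmxA.
have core : V^T *m (H^T *m H) *m V = S *m S.
  rewrite HT /H !mulmxA VV mul1mx -(mulmxA S V^T V) VV mulmx1.
  by rewrite -mulmxA VV mulmx1.
have eqA : (y *m map_mx toC (H^T *m H) *m y^t*) 0 0 =
    \sum_i toC (e i) * (w 0 i * (w 0 i)^*).
  by rewrite HG unit_rot // qf_diag; apply: eq_bigr => i _; rewrite mxE.
have SS : map_mx toC S *m map_mx toC S =
    W *m map_mx toC (H^T *m H) *m map_mx toC V by rewrite /W -!map_mxM core.
have eqB : (y *m map_mx toC (H^T *m H) *m y^t*) =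
    (z *m map_mx toC S) *m (z *m map_mx toC S)^t*.
  have e1 : (z *m W)^t* = W^t* *m z^t* by rewrite trmx_mul map_mxM.
  have e2 : (z *m map_mx toC S)^t* = (map_mx toC S)^t* *m z^t* by rewrite trmx_mul map_mxM.
  rewrite /y e1 e2 Wt tC_toC ST.
  by rewrite !mulmxA -(mulmxA z (map_mx toC S)) SS !mulmxA.
have eqC := nsq_lower ST l0 (HS z).
have nyz : nsq y = nsq z.
  by rewrite /nsq /y trmx_mul map_mxM mulmxA -(mulmxA z W) WW mulmx1.
have nwy : nsq w = nsq y by apply: unit_nsq.
pose F i := toC (lam ^+ 2 - e i) * (w 0 i * (w 0 i)^*).
have Fge : forall i, 0 <= F i.
  move=> i; rewrite /F; case: (boolP (lam <= Num.sqrt (e i))) => [/wJ ->|Hn].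
    by rewrite mul0r mulr0.
  apply: mulr_ge0; last exact: mul_conjC_ge0.
  rewrite ler0c subr_ge0; apply: ltW.
  rewrite -ltNge in Hn.
  rewrite -(sqr_sqrtr (e0 i)) !expr2; apply: ltr_pM => //; exact: sqrtr_ge0.
have Hsum : \sum_i F i = 0.
  apply/le_anti; rewrite sumr_ge0 ?andbT; last by move=> i _; apply: Fge.
  have -> : \sum_i F i = toC (lam ^+ 2) * nsq w - \sum_i toC (e i) * (w 0 i * (w 0 i)^*).
    rewrite nsqE mulr_sumr -sumrB; apply: eq_bigr => i _.
    by rewrite /F rmorphB mulrBl.
  by rewrite subr_le0 -eqA eqB -/(nsq (z *m map_mx toC S)) nwy nyz.
have w0 : w = 0.
  apply/rowP => i; rewrite [RHS]mxE; case: (boolP (lam <= Num.sqrt (e i))) => [/wJ //|Hn].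
  have := psumr_eq0P (P := predT) (fun i _ => Fge i) Hsum (i := i) isT.
  rewrite /F => /eqP; rewrite mulf_eq0 mul_conjC_eq0 => /orP [|/eqP //].
  rewrite -ltNge in Hn; move/eqP/(congr1 (@complex.Re R)) => /= /eqP; rewrite subr_eq0 => /eqP He.
  by move: Hn; rewrite -He sqrtr_sqr ger0_norm // ltxx.
have y0 : y = 0.
  have -> : y = w *m P by rewrite /w -mulmxA -invmx_unitary // mulVmx ?unitarymx_unit // mulmx1.
  by rewrite w0 mul0mx.
have : z = y *m W^t* by rewrite /y -mulmxA WW mulmx1.
by rewrite y0 mul0mx => /eqP; rewrite (negbTE z0).
Qed.

End F3.

Section Frob.
Variable R : rcfType.

Lemma frob2_tr p q (A : 'M[R]_(p,q)) : frob2 A = \tr (A^T *m A).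
Proof.
rewrite /frob2 /mxtrace exchange_big; apply: eq_bigr => j _.
by rewrite mxE; apply: eq_bigr => i _; rewrite !mxE expr2.
Qed.

Lemma frob2_scale p q (a : R) (A : 'M[R]_(p,q)) : frob2 (a *: A) = a ^+ 2 * frob2 A.
Proof.
rewrite /frob2 mulr_sumr; apply: eq_bigr => i _; rewrite mulr_sumr.
by apply: eq_bigr => j _; rewrite mxE exprMn.
Qed.

Lemma frob2_orth n k (V : 'M[R]_(n,k)) (Q : 'M[R]_k) : V^T *m V = 1%:M ->
  frob2 (V *m Q *m V^T) = frob2 Q.
Proof.
move=> VV; rewrite !frob2_tr !trmx_mul trmxK.
rewrite !mulmxA -(mulmxA _ V^T V) VV mulmx1.
by rewrite mxtrace_mulC !mulmxA VV mul1mx.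
Qed.

End Frob.

Section Arith.
Variable R : rcfType.

Lemma bound_l (Clam crl C0 rl rn s1 sk k K n fQ f0 : R) :
  0 < Clam -> 0 <= crl -> 0 <= rn -> crl * rn <= rl ->
  0 <= s1 -> 0 <= sk -> Clam <= sk / s1 ->
  fQ <= k * s1 ^+ 2 -> fQ = rl ^+ 2 * f0 ->
  C0 ^+ 2 * K^-1 * n ^+ 2 <= f0 -> 1 <= k -> k <= K ->
  Clam ^+ 2 * (crl ^+ 2 * rn ^+ 2 * (C0 ^+ 2 * n ^+ 2 / K ^+ 2)) <= sk ^+ 2.
Proof.
move=> Cl0 cr0 rn0 Hrl s10 sk0 HA4 HfQ EfQ Hf0 k1 kK.
have k0 : 0 < k by apply: lt_le_trans k1; rewrite ltr01.
have K0 : 0 < K by apply: lt_le_trans kK.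
have s1p : 0 < s1.
  rewrite lt_neqAle s10 andbT; apply/eqP => E; move: HA4; rewrite -E invr0 mulr0.
  by rewrite leNgt Cl0.
have Hsk : Clam * s1 <= sk by rewrite -ler_pdivlMr.
have rl0 : 0 <= rl by apply: le_trans Hrl; apply: mulr_ge0.
have D0 : 0 <= C0 ^+ 2 * n ^+ 2 / K ^+ 2.
  by apply: divr_ge0; [apply: mulr_ge0; apply: sqr_ge0 | apply: sqr_ge0].
have H1 : rl ^+ 2 * (C0 ^+ 2 * n ^+ 2 / K ^+ 2) <= s1 ^+ 2.
  have : rl ^+ 2 * (C0 ^+ 2 * K^-1 * n ^+ 2) <= k * s1 ^+ 2.
    apply: le_trans HfQ; rewrite EfQ; apply: ler_wpM2l => //; exact: sqr_ge0.
  move=> H; have H2 : rl ^+ 2 * (C0 ^+ 2 * K^-1 * n ^+ 2) / k <= s1 ^+ 2.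
    by rewrite ler_pdivrMr // [s1 ^+ 2 * k]mulrC.
  apply: le_trans H2; rewrite -[rl ^+ 2 * _ / k]mulrA; apply: ler_wpM2l; first exact: sqr_ge0.
  have -> : C0 ^+ 2 * n ^+ 2 / K ^+ 2 = (C0 ^+ 2 * K^-1 * n ^+ 2) * K^-1.
    by rewrite expr2 invfM; ring.
  apply: ler_wpM2l.
    by apply: mulr_ge0; [apply: mulr_ge0; [apply: sqr_ge0|rewrite invr_ge0 ltW]|apply: sqr_ge0].
  by rewrite lef_pV2 ?posrE.
have H2 : crl ^+ 2 * rn ^+ 2 <= rl ^+ 2.
  by rewrite -exprMn; apply: lerXn2r => //; rewrite ?nnegrE ?mulr_ge0.
have H3 : Clam ^+ 2 * s1 ^+ 2 <= sk ^+ 2.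
  by rewrite -exprMn; apply: lerXn2r => //; rewrite ?nnegrE ?mulr_ge0 // ltW.
apply: le_trans H3; apply: ler_wpM2l; first exact: sqr_ge0.
apply: le_trans H1; apply: ler_wpM2r => //.
Qed.

End Arith.

Lemma final_arith (R : rcfType) (B lo L M Lm : R) :
  0 <= B -> 0 <= lo -> 0 < M -> 0 <= L -> lo * L / M <= Lm ->
  B * (Num.sqrt lo * Num.sqrt L / Num.sqrt M) <= B * Num.sqrt Lm.
Proof.
move=> B0 lo0 M0 L0 H; apply: ler_wpM2l => //.
have Lm0 : 0 <= Lm by apply: le_trans H; apply: divr_ge0 (ltW M0); apply: mulr_ge0.
have M0' : 0 <= M := ltW M0.
rewrite -sqrtrM // -sqrtrV // -sqrtrM ?mulr_ge0 //.
by rewrite ler_sqrt.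
Qed.

Unset Implicit Arguments.

Theorem mainTheorem8 (R : realType)
  (C_K c_lo c_hi C_rho C_lam c_rho_lo c_rho_hi C_0P : R) :
  0 < C_K -> 0 < c_lo -> 0 < c_hi -> 0 < C_rho -> 0 < C_lam < 1 ->
  0 < c_rho_lo -> 0 < c_rho_hi -> 0 < C_0P ->
  exists C : R, 0 < C /\
  forall (n L M : nat) (c : 'I_L -> 'I_M) (Km : 'I_M -> nat)
    (V : forall m : 'I_M, 'M[R]_(n, Km m))
    (Q : forall m : 'I_M, 'I_L -> 'M[R]_(Km m))
    (rho : 'I_L -> R) (P0 : 'I_L -> 'M[R]_n),
  let K : nat := (\max_(m < M) Km m)%N in
  let Lm (m : 'I_M) : nat := #|[set l | c l == m]| in
  let P (l : 'I_L) : 'M[R]_n := V (c l) *m Q (c l) l *m (V (c l))^T in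
  let rho_n : R := (L%:R)^-1 * \sum_(l < L) rho l in
  (* DIMPLE-GDPG model *)
  (forall m : 'I_M, exists l : 'I_L, c l = m) ->
  (forall m : 'I_M, (V m)^T *m V m = 1%:M) ->
  (forall l : 'I_L, (Q (c l) l)^T = Q (c l) l) ->
  (forall (l : 'I_L) (i j : 'I_n), 0 <= P l i j <= 1) ->
  (* A1 *)
  (forall m : 'I_M, C_K * K%:R <= (Km m)%:R /\ (Km m <= K)%N) ->
  (forall m : 'I_M, c_lo * L%:R / M%:R <= (Lm m)%:R <= c_hi * L%:R / M%:R) ->
  (* A3 *)
  (forall l : 'I_L, P l = rho l *: P0 l /\ maxabs (P0 l) = 1) ->
  (forall l : 'I_L, C_rho * (n%:R)^-1 * ln (n%:R) <= rho l) ->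
  (* A4 *)
  (forall l : 'I_L,
     C_lam <= sigma (Km (c l)) (Q (c l) l) / sigma 1 (Q (c l) l)) ->
  (* A5 *)
  (forall l : 'I_L, c_rho_lo * rho_n <= rho l <= c_rho_hi * rho_n) ->
  (* A6 *)
  (forall l : 'I_L, C_0P ^+ 2 * (K%:R)^-1 * (n%:R) ^+ 2 <= frob2 (P0 l)) ->
  forall m : 'I_M,
    let H : 'M[R]_n :=
      (Num.sqrt (Lm m)%:R)^-1 *: \sum_(l < L | c l == m) (P l *m P l) in
    H = V m *m ((Num.sqrt (Lm m)%:R)^-1 *:
                  \sum_(l < L | c l == m) (Q m l *m Q m l)) *m (V m)^T /\
    C * (n%:R ^+ 2 * rho_n ^+ 2 * Num.sqrt (L%:R))
      / ((K%:R) ^+ 2 * Num.sqrt (M%:R)) <= sigma (Km m) H.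
Proof.
move=> CK0 clo0 chi0 Crho0 /andP[Clam0 Clam1] crl0 crh0 C0P0.
exists (C_lam ^+ 2 * c_rho_lo ^+ 2 * C_0P ^+ 2 * Num.sqrt c_lo); split.
  by rewrite !mulr_gt0 ?exprn_gt0 ?sqrtr_gt0.
move=> n L M c Km V Q rho P0 K Lm P rho_n csurj VV Qsym P01 A1a A1b A3a A3b A4 A5 A6 m H.
have tr : forall l, c l = m -> [/\ (Q m l)^T = Q m l,
    C_lam <= sigma (Km m) (Q m l) / sigma 1 (Q m l) &
    P l = V m *m Q m l *m (V m)^T].
  move=> l E; have h1 := Qsym l; have h2 := A4 l; rewrite /P.
  by move: (c l) E h1 h2 => ml -> h1 h2; split.
have HE : H = V m *m ((Num.sqrt (Lm m)%:R)^-1 *: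
                  \sum_(l < L | c l == m) (Q m l *m Q m l)) *m (V m)^T.
  rewrite /H -scalemxAr -scalemxAl; congr (_ *: _).
  rewrite mulmx_sumr mulmx_suml; apply: eq_bigr => l /eqP E.
  have [_ _ ->] := tr l E.
  by rewrite !mulmxA -(mulmxA _ (V m)^T (V m)) VV mulmx1.
split => //.
rewrite HE.
have sg0 : forall (p q : nat) (A : 'M[R]_(p,q)) j, 0 <= sigma j A.
  by move=> p q A j; apply: sigma_nonneg.
have [k0|kpos] := posnP (Km m).
  have K0 : K = 0%N.
    have [H1 _] := A1a m; move: H1; rewrite k0 pmulr_rle0 // lern0.
    by move/eqP.
  by rewrite K0 expr0n /= mul0r invr0 mulr0; apply: sg0.
have [n0|npos] := posnP n.
  have -> : (n%:R : R) = 0 by rewrite n0.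
  by rewrite expr0n /= !mul0r mulr0 mul0r; apply: sg0.
have Mpos : (0 < M)%N by apply: leq_ltn_trans (ltn_ord m).
have Lmpos : (0 < Lm m)%N.
  have [l El] := csurj m; apply/card_gt0P; exists l; by rewrite inE El.
have Kpos : (0 < K)%N by apply: leq_trans kpos (proj2 (A1a m)).
have nR : (1 : R) <= n%:R by rewrite ler1n.
have rho0 : forall l, 0 <= rho l.
  move=> l; apply: le_trans (A3b l); apply: mulr_ge0; last exact: ln_ge0.
  by apply: mulr_ge0; [exact: ltW|rewrite invr_ge0 ler0n].
have rn0 : 0 <= rho_n.
  by apply: mulr_ge0; [rewrite invr_ge0 ler0n|apply: sumr_ge0 => l _].
set a := (Num.sqrt (Lm m)%:R)^-1.
have a0 : 0 <= a by rewrite invr_ge0 sqrtr_ge0.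
set B := C_lam ^+ 2 * (c_rho_lo ^+ 2 * rho_n ^+ 2 * (C_0P ^+ 2 * n%:R ^+ 2 / K%:R ^+ 2)).
have B0 : 0 <= B.
  apply: mulr_ge0; first exact: sqr_ge0.
  apply: mulr_ge0; first by apply: mulr_ge0; apply: sqr_ge0.
  by apply: divr_ge0; [apply: mulr_ge0; apply: sqr_ge0 | apply: sqr_ge0].
have Bl : forall l, c l == m -> B <= sigma (Km m) (Q m l) ^+ 2.
  move=> l /eqP E; have [QT HA4 EP] := tr l E.
  apply: (@bound_l _ C_lam c_rho_lo C_0P (rho l) rho_n (sigma 1 (Q m l)) _ (Km m)%:R K%:R n%:R
          (frob2 (Q m l)) (frob2 (P0 l))) => //.
  - exact: ltW.
  - by have /andP[] := A5 l.
  - exact: frob_sig1.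
  - by rewrite -(frob2_orth (Q m l) (VV m)) -EP (proj1 (A3a l)) frob2_scale.
  - by rewrite ler1n.
  - by rewrite ler_nat (proj2 (A1a m)).
set T := a * \sum_(l < L | c l == m) sigma (Km m) (Q m l) ^+ 2.
have lamT : C_lam ^+ 2 * c_rho_lo ^+ 2 * C_0P ^+ 2 * Num.sqrt c_lo *
    (n%:R ^+ 2 * rho_n ^+ 2 * Num.sqrt L%:R) / (K%:R ^+ 2 * Num.sqrt M%:R) <= T.
  have sumB : \sum_(l < L | c l == m) B = (Lm m)%:R * B.
    rewrite (eq_bigl (fun l => l \in [set l | c l == m])); last by move=> l; rewrite inE.
    by rewrite sumr_const mulr_natl.
  have T1 : a * ((Lm m)%:R * B) <= T.
    by rewrite /T -sumB; apply: ler_wpM2l => //; apply: ler_sum => l; apply: Bl.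
  have sp : 0 < Num.sqrt ((Lm m)%:R : R) by rewrite sqrtr_gt0 ltr0n.
  have T2 : a * ((Lm m)%:R * B) = B * Num.sqrt (Lm m)%:R.
    rewrite /a -{2}(sqr_sqrtr (ler0n R (Lm m))) expr2; field.
    by rewrite gt_eqF.
  have Kn0 : (K%:R : R) != 0 by rewrite pnatr_eq0 -lt0n.
  have Mn0 : Num.sqrt (M%:R : R) != 0 by rewrite gt_eqF // sqrtr_gt0 ltr0n.
  have L1 : C_lam ^+ 2 * c_rho_lo ^+ 2 * C_0P ^+ 2 * Num.sqrt c_lo *
      (n%:R ^+ 2 * rho_n ^+ 2 * Num.sqrt L%:R) / (K%:R ^+ 2 * Num.sqrt M%:R) =
      B * (Num.sqrt c_lo * Num.sqrt L%:R / Num.sqrt M%:R).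
    by rewrite /B; field; rewrite Mn0 Kn0.
  rewrite L1; apply: le_trans T1; rewrite T2; apply: final_arith => //.
  - exact: ltW.
  - by rewrite ltr0n.
  - by have /andP[] := A1b m.
apply: F3 => //.
- apply/matrixP => i j; rewrite !mxE !summxE; congr (_ * _).
  apply: eq_bigr => l /eqP E; have [QT _ _] := tr l E.
  have QQT : (Q m l *m Q m l)^T = Q m l *m Q m l by rewrite trmx_mul QT.
  by move/matrixP: QQT => /(_ i j); rewrite mxE.
- have := ltW Clam0; have := ltW crl0; have := ltW C0P0; have := ler0n R n => *.
  apply: divr_ge0; rewrite !mulr_ge0 ?sqr_ge0 ?sqrtr_ge0 //.
  all: try by rewrite invr_ge0 ler0n.
  all: try by apply: sumr_ge0 => l _.
move=> z.
apply: le_trans (_ : (real_complex R T) * nsq z <= _).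
  by apply: ler_wpM2r; [apply: nsq_ge0|rewrite lecR].
have mS : map_mx (real_complex R) (a *: \sum_(l < L | c l == m) (Q m l *m Q m l)) =
    (real_complex R a) *: \sum_(l < L | c l == m) map_mx (real_complex R) (Q m l *m Q m l).
  apply/matrixP => i j; rewrite mxE [RHS]mxE !summxE /=.
  rewrite [in LHS]mxE summxE (rmorphM (real_complex R)) rmorph_sum.
  by congr (_ * _); apply: eq_bigr => l _; rewrite [RHS]mxE.
rewrite mS -scalemxAr -scalemxAl mulmx_sumr mulmx_suml mxE summxE.
rewrite /T rmorphM rmorph_sum /= -mulrA mulr_suml.
apply: ler_wpM2l; first by rewrite ler0c.
apply: ler_sum => l /eqP E; have [QT _ _] := tr l E.
by have := sig_last_qf (Q m l) z; rewrite QT.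
Qed.
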